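(* (1) Treegrams need not be join-irreducible in $\mathbf{Cliqgm}(X)$: for $X=\{x,y,z\}$ there is a treegram over $X$ which equals the join in $\mathbf{Cliqgm}(X)$ of three cliquegrams each different from it. (2) Treegrams are join-dense in $\mathbf{Cliqgm}(X)$: for every finite set $X$, every cliquegram over $X$ is the join in $\mathbf{Cliqgm}(X)$ (computed pointwise in $\mathbf{Cliq}(X)$) of finitely many treegrams over $X$.
   Context: A clique-set of $X$ is a set $\mathcal{C}$ of nonempty subsets of $X$ such that (i) no member is contained in another, and (ii) for every nonempty $Y\subset X$, if every pair $y,y'\in Y$ (possibly equal) lies in some member of $\mathcal{C}$, then $Y$ lies in some member of $\mathcal{C}$. $\mathbf{Cliq}(X)$ is ordered by $\mathcal{C}\leq\mathcal{C}'$ iff every member of $\mathcal{C}$ is contained in a member of $\mathcal{C}'$; the join of clique-sets is the set of maximal cliques of the union of their graphs (vertices = union of members, edges = pairs of distinct elements lying in a common member). A cliquegram over $X$ is a map $C_X:\mathbb{R}\to\mathbf{Cliq}(X)$ that is monotone, equals $\{X\}$ for all large $t$ and $\emptyset$ for all small $t$, and is constant on $(-\infty,a_1)$, on each $[a_i,a_{i+1})$ and on $[a_n,\infty)$ for some reals $a_1<\dots<a_n$; $\mathbf{Cliqgm}(X)$ is the lattice of cliquegrams with pointwise order and operations. A treegram over $X$ is a cliquegram $C_X$ such that each $C_X(t)$ is a subpartition of $X$ (pairwise disjoint members). Join-irreducible: not the bottom element and not equal to a join of two elements both different from it. *)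

(* Defs.v *)
From HB Require Import structures.
From mathcomp Require Import all_boot all_order all_algebra.
From mathcomp Require Import reals.
Set Implicit Arguments. Unset Strict Implicit. Unset Printing Implicit Defensive.
Import Order.TTheory GRing.Theory Num.Theory.
Local Open Scope ring_scope.

Section Cliques.
Variable X : finType.

Definition is_cliqueset (C : {set {set X}}) : Prop :=
  [/\ (forall A, A \in C -> A != set0),
      (forall A B, A \in C -> B \in C -> A \subset B -> A = B) &
      (forall Y : {set X}, Y != set0 ->
         (forall y y', y \in Y -> y' \in Y -> exists2 A, A \in C & (y \in A) && (y' \in A)) ->
         exists2 A, A \in C & Y \subset A)].

Definition cliq_le (C C' : {set {set X}}) : Prop :=
  forall A, A \in C -> exists2 B, B \in C' & A \subset B.

(* join of two clique-sets: maximal cliques of the union of their graphs *)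
Definition cverts (C C' : {set {set X}}) : {set X} :=
  \bigcup_(A in C :|: C') A.

Definition cadj (C C' : {set {set X}}) (u v : X) : bool :=
  (u != v) && [exists A in C :|: C', (u \in A) && (v \in A)].

Definition is_gclique (C C' : {set {set X}}) (Y : {set X}) : bool :=
  (Y \subset cverts C C') &&
  [forall u in Y, forall v in Y, (u != v) ==> cadj C C' u v].

Definition cjoin (C C' : {set {set X}}) : {set {set X}} :=
  [set Y : {set X} | (Y != set0) && is_gclique C C' Y &&
     [forall Z : {set X}, (is_gclique C C' Z && (Y \subset Z)) ==> (Z == Y)]].

Definition is_subpartition (C : {set {set X}}) : Prop :=
  forall A B, A \in C -> B \in C -> A != B -> [disjoint A & B].

End Cliques.

Section Cliquegrams.
Variables (R : realType) (X : finType).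

Definition is_cliquegram (C : R -> {set {set X}}) : Prop :=
  [/\ (forall t, is_cliqueset (C t)),
      (forall s t, s <= t -> cliq_le (C s) (C t)),
      (exists T : R, forall t, T <= t -> C t = [set [set: X]]),
      (exists T : R, forall t, t <= T -> C t = set0) &
      (exists a : seq R,
         [/\ (0 < size a)%N, sorted <%R a,
             (forall s t, s < a`_0 -> t < a`_0 -> C s = C t),
             (forall i : nat, (i.+1 < size a)%N -> forall s t,
                 a`_i <= s < a`_i.+1 -> a`_i <= t < a`_i.+1 -> C s = C t) &
             (forall s t, a`_(size a).-1 <= s -> a`_(size a).-1 <= t -> C s = C t)])].

Definition is_treegram (C : R -> {set {set X}}) : Prop :=
  is_cliquegram C /\ forall t, is_subpartition (C t).

End Cliquegrams.

(* Main.v *)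
Require Import Defs.
From HB Require Import structures.
From mathcomp Require Import all_boot all_order all_algebra.
From mathcomp Require Import reals.
Import Order.TTheory GRing.Theory Num.Theory.
Local Open Scope ring_scope.
Set Implicit Arguments. Unset Strict Implicit. Unset Printing Implicit Defensive.

Section Gen.
Variable X : finType.
Implicit Types (C D : {set {set X}}) (A B Y Z : {set X}) (u v : X).

Definition pin D u v : bool := [exists A in D, (u \in A) && (v \in A)].
Definition gcl (P : rel X) Y := [forall u in Y, forall v in Y, P u v].
Definition mcP (P : rel X) : {set {set X}} :=
  [set Y | (Y != set0) && gcl P Y &&
     [forall Z : {set X}, (gcl P Z && (Y \subset Z)) ==> (Z == Y)]].

Lemma gclP P Y : gcl P Y -> forall y y', y \in Y -> y' \in Y -> P y y'.
Proof.
move/forallP=> H y y' yY y'Y; move: (H y); rewrite yY /= => /forallP/(_ y').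
by rewrite y'Y.
Qed.

Lemma gcl_ext P Q Y : (forall u v, P u v = Q u v) -> gcl P Y = gcl Q Y.
Proof.
move=> H; rewrite /gcl; apply: eq_forallb => u; congr (_ ==> _).
by apply: eq_forallb => v; rewrite H.
Qed.

Lemma mcP_ext P Q : (forall u v, P u v = Q u v) -> mcP P = mcP Q.
Proof.
move=> H; apply/setP => Y; rewrite !inE (gcl_ext Y H); congr (_ && _).
by apply: eq_forallb => Z; rewrite (gcl_ext Z H).
Qed.

Lemma is_gcliqueE C C' Y : is_gclique C C' Y = gcl (pin (C :|: C')) Y.
Proof.
rewrite /is_gclique /gcl; apply/andP/forallP.
  case=> /subsetP sub /forallP H u; apply/implyP => uY; apply/forallP => v.
  apply/implyP => vY; case: (eqVneq u v) => [<-|uv].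
    have /bigcupP[A hAC uA] := sub u uY.
    by apply/existsP; exists A; rewrite hAC uA.
  move: (H u); rewrite uY /= => /forallP/(_ v); rewrite vY uv /=.
  by case/andP.
move=> H; split.
  apply/subsetP => u uY; move: (H u); rewrite uY /= => /forallP/(_ u).
  rewrite uY /= => /existsP[A /andP[hAC /andP[uA _]]].
  by apply/bigcupP; exists A.
apply/forallP => u; apply/implyP => uY; apply/forallP => v; apply/implyP => vY.
apply/implyP => uv; rewrite /cadj uv /=.
by move: (H u); rewrite uY /= => /forallP/(_ v); rewrite vY.
Qed.

Lemma cjoinE C C' : cjoin C C' = mcP (pin (C :|: C')).
Proof.
apply/setP => Y; rewrite !inE is_gcliqueE; congr (_ && _).
by apply: eq_forallb => Z; rewrite is_gcliqueE.
Qed.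

Lemma pin_ok D u v : pin D u v -> [&& pin D u u, pin D v v & pin D v u].
Proof.
case/existsP=> A /andP[hAC /andP[uA vA]].
by apply/and3P; split; apply/existsP; exists A; rewrite hAC ?uA ?vA.
Qed.

Lemma pinU C D u v : pin (C :|: D) u v = pin C u v || pin D u v.
Proof.
apply/existsP/orP.
  case=> A /andP[]; rewrite inE => /orP[] hAC HA.
    by left; apply/existsP; exists A; rewrite hAC HA.
  by right; apply/existsP; exists A; rewrite hAC HA.
case=> /existsP[A /andP[hAC HA]]; exists A; by rewrite inE hAC ?orbT HA.
Qed.

Lemma pin1 A u v : pin [set A] u v = (u \in A) && (v \in A).
Proof.
apply/existsP/idP => [[B /andP[/set1P -> H]]|H]; first exact: H.
by exists A; rewrite set11 H.
Qed.

Lemma pin0 u v : pin set0 u v = false.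
Proof. by apply/existsP => -[B]; rewrite inE. Qed.

Lemma pin_mcP (P : rel X) :
  (forall u v, P u v -> [&& P u u, P v v & P v u]) ->
  forall u v, pin (mcP P) u v = P u v.
Proof.
move=> Pok u v; apply/existsP/idP => [[Y /andP[]]|Puv].
  rewrite inE => /andP[/andP[_ gY] _] /andP[uY vY].
  exact: (gclP gY).
have g0 : gcl P [set u; v].
  case/and3P: (Pok _ _ Puv) => h1 h2 h3.
  apply/forallP => a; apply/implyP; rewrite !inE => /orP[]/eqP->;
  apply/forallP => b; apply/implyP; rewrite !inE => /orP[]/eqP-> //.
case: (maxset_exists g0) => Y /maxsetP [gY maxY] /subsetP sub.
have uY : u \in Y by rewrite sub // set21.
have vY : v \in Y by rewrite sub // set22.
exists Y; rewrite uY vY inE gY !andbT; apply/andP; split.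
  by apply/set0Pn; exists u.
apply/forallP => Z; apply/implyP => /andP[gZ sYZ]; apply/eqP; exact: maxY.
Qed.

Lemma pin_cjoin C C' u v : pin (cjoin C C') u v = pin C u v || pin C' u v.
Proof. by rewrite cjoinE pin_mcP ?pinU //; exact: pin_ok. Qed.

Lemma gcl_mem C A : A \in C -> gcl (pin C) A.
Proof.
move=> hAC; apply/forallP => u; apply/implyP => uA; apply/forallP => v.
by apply/implyP => vA; apply/existsP; exists A; rewrite hAC uA vA.
Qed.

Lemma mcP_cs C : is_cliqueset C -> mcP (pin C) = C.
Proof.
case=> hne hac hcl; apply/setP => Y; rewrite inE; apply/idP/idP.
  case/andP => /andP[Yn gY] /forallP mY.
  have [B BC sYB] : exists2 B, B \in C & Y \subset B.
    apply: (hcl Y Yn) => y y' yY y'Y.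
    by case/existsP: (gclP gY yY y'Y) => A /andP[hAC H]; exists A.
  by have := mY B; rewrite gcl_mem // sYB /= => /eqP <-.
move=> YC; rewrite hne // gcl_mem //=; apply/forallP => Z.
apply/implyP => /andP[gZ sYZ].
have Zn : Z != set0.
  case/set0Pn: (hne _ YC) => y yY; apply/set0Pn; exists y.
  exact: (subsetP sYZ).
have [B BC sZB] : exists2 B, B \in C & Z \subset B.
  apply: (hcl Z Zn) => y y' yY y'Y.
  by case/existsP: (gclP gZ yY y'Y) => A /andP[hAC H]; exists A.
have YB : Y = B by apply: hac => //; exact: subset_trans sYZ sZB.
by rewrite eqEsubset sYZ andbT YB.
Qed.

Lemma cs0 : is_cliqueset (set0 : {set {set X}}).
Proof.
split=> [A|A B|Y]; rewrite ?inE //.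
case/set0Pn => y yY H; case: (H y y yY yY) => A; by rewrite inE.
Qed.

Lemma cs1 A : A != set0 -> is_cliqueset [set A].
Proof.
move=> An; split=> [B /set1P -> //|B B' /set1P -> /set1P -> //|Y _ H].
exists A; first exact: set11.
apply/subsetP => y yY; case: (H y y yY yY) => B /set1P -> /andP[] //.
Qed.

Lemma sp0 : is_subpartition (set0 : {set {set X}}).
Proof. by move=> A B; rewrite inE. Qed.

Lemma sp1 A : is_subpartition [set A].
Proof. by move=> B B' /set1P -> /set1P ->; rewrite eqxx. Qed.

Definition f A D : {set {set X}} :=
  if D == [set [set: X]] then [set [set: X]]
  else if [exists B in D, (A != set0) && (A \subset B)] then [set A] else set0.

Lemma f_bot A : f A set0 = set0.
Proof.
rewrite /f; case: eqP => [H|_].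
  by have := set11 [set: X]; rewrite -H inE.
by case: existsP => // -[B]; rewrite inE.
Qed.

Lemma f_top A : f A [set [set: X]] = [set [set: X]].
Proof. by rewrite /f eqxx. Qed.

Lemma f_cs A D : is_cliqueset D -> is_cliqueset (f A D).
Proof.
rewrite /f; case: eqP => [<- //|_] hD.
case: existsP => [[B /andP[_ /andP[An _]]]|_]; [exact: cs1|exact: cs0].
Qed.

Lemma f_sp A D : is_subpartition (f A D).
Proof.
rewrite /f; case: eqP => _; first exact: sp1.
case: existsP => _; [exact: sp1|exact: sp0].
Qed.

Lemma f_le A D D' : cliq_le D D' -> is_cliqueset D' -> cliq_le (f A D) (f A D').
Proof.
rewrite /f; case: (eqVneq D' [set [set: X]]) => [->|hD'].
  by move=> _ _ Z _; exists [set: X]; [exact: set11|exact: subsetT].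
case: (eqVneq D [set [set: X]]) => [hD|hD].
  move=> le [hne hac hcl].
  have hT : [set: X] \in D by rewrite hD set11.
  have [B BD' sB] := le [set: X] hT.
  have eB : B = [set: X] by apply/eqP; rewrite eqEsubset subsetT sB.
  have eD' : D' = [set [set: X]].
    apply/setP => Z; rewrite inE; apply/idP/eqP => [ZD'|->]; last by rewrite -eB.
    by have := hac _ _ ZD' BD'; rewrite eB subsetT; apply.
  by rewrite eD' eqxx in hD'.
case: existsP => [[B /andP[BD hAB]] le _| _ le _].
  case/andP: hAB => An sAB; have [B' B'D' sBB'] := le B BD.
  case: existsP => [_|[]]; last by exists B'; rewrite B'D' An (subset_trans sAB sBB').
  by move=> Z ZA; exists Z; rewrite ?subxx.
by move=> Z; rewrite inE.
Qed.

Lemma pin_f A D u v : pin (f A D) u v -> pin D u v.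
Proof.
rewrite /f; case: eqP => [-> //|_].
case: existsP => [[B /andP[BD /andP[_ sAB]]]|_]; last by rewrite pin0.
rewrite pin1 => /andP[uA vA]; apply/existsP; exists B.
by rewrite BD (subsetP sAB _ uA) (subsetP sAB _ vA).
Qed.

Lemma pin_f_rev B D u v : is_cliqueset D -> B \in D -> u \in B -> v \in B ->
  pin (f B D) u v.
Proof.
move=> [hne _ _] BD uB vB; rewrite /f; case: eqP => [E|_].
  by rewrite -E; apply/existsP; exists B; rewrite BD uB vB.
case: existsP => [_|[]]; last by exists B; rewrite BD hne // subxx.
by rewrite pin1 uB vB.
Qed.

End Gen.

From mathcomp Require Import lra.

Lemma tg_f (R : realType) (X : finType) (C : R -> {set {set X}}) (A : {set X}) :
  is_cliquegram C -> is_treegram (fun t => f A (C t)).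
Proof.
case=> hcs hmon [T1 hT1] [T2 hT2] [a [ha1 ha2 ha3 ha4 ha5]].
split; last by move=> t; exact: f_sp.
split.
- by move=> t; exact: f_cs.
- by move=> s t st; apply: f_le; [exact: hmon|exact: hcs].
- by exists T1 => t /hT1 ->; exact: f_top.
- by exists T2 => t /hT2 ->; exact: f_bot.
- exists a; split => //.
  + by move=> s t hs ht; rewrite (ha3 s t hs ht).
  + by move=> i hi s t hs ht; rewrite (ha4 i hi s t hs ht).
  + by move=> s t hs ht; rewrite (ha5 s t hs ht).
Qed.

Lemma fold_pin (R : realType) (X : finType) (T0 : R -> {set {set X}}) s t u v :
  pin (foldr (fun T acc => cjoin (T t) acc) (T0 t) s) u v =
  pin (T0 t) u v || has (fun T => pin (T t) u v) s.
Proof.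
elim: s => [|T s IH] /=; first by rewrite orbF.
by rewrite pin_cjoin IH orbCA.
Qed.

Definition o0 : 'I_3 := @Ordinal 3 0 isT.
Definition o1 : 'I_3 := @Ordinal 3 1 isT.
Definition o2 : 'I_3 := @Ordinal 3 2 isT.

Definition step (R : realType) (D : {set {set 'I_3}}) (t : R) : {set {set 'I_3}} :=
  if t < 0 then set0 else if t < 1 then D else [set [set: 'I_3]].

Lemma cliq_le_refl (X : finType) (D : {set {set X}}) : cliq_le D D.
Proof. by move=> Z ZD; exists Z; rewrite ?subxx. Qed.

Lemma cliq_leT (X : finType) (D : {set {set X}}) : cliq_le D [set [set: X]].
Proof. by move=> Z _; exists [set: X]; [exact: set11|exact: subsetT]. Qed.

Lemma cliq_le0 (X : finType) (D : {set {set X}}) : cliq_le set0 D.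
Proof. by move=> Z; rewrite inE. Qed.

Lemma setT_cs : is_cliqueset [set [set: 'I_3]].
Proof. by apply: cs1; apply/set0Pn; exists o0. Qed.

Lemma step_cg (R : realType) D : is_cliqueset D -> is_cliquegram (@step R D).
Proof.
move=> hD; split.
- move=> t; rewrite /step; case: ifP => _; first exact: cs0.
  by case: ifP => _; [exact: hD|exact: setT_cs].
- move=> s t st; rewrite /step.
  case: (ltP s 0) => hs; first exact: cliq_le0.
  case: (ltP t 0) => ht; first by exfalso; lra.
  case: (ltP t 1) => ht1; last exact: cliq_leT.
  case: (ltP s 1) => hs1; first exact: cliq_le_refl.
  by exfalso; lra.
- exists 1 => t ht; rewrite /step.
  case: (ltP t 0) => h0; first by exfalso; lra.
  case: (ltP t 1) => h1 //; by exfalso; lra.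
- exists (-1) => t ht; rewrite /step.
  case: (ltP t 0) => h0 //; by exfalso; lra.
- exists [:: 0; 1]; split => //=.
  + by rewrite andbT ltr01.
  + move=> s t hs ht; rewrite /step hs ht //.
  + move=> [|i] //= _ s t /andP[hs0 hs1] /andP[ht0 ht1]; rewrite /step.
    case: (ltP s 0) => h1; first by exfalso; lra.
    case: (ltP t 0) => h2; first by exfalso; lra.
    by rewrite hs1 ht1.
  + move=> s t hs ht; rewrite /step.
    case: (ltP s 0) => h1; first by exfalso; lra.
    case: (ltP t 0) => h2; first by exfalso; lra.
    case: (ltP s 1) => h3; first by exfalso; lra.
    case: (ltP t 1) => h4; first by exfalso; lra.
    done.
Qed.

Lemma pair_cs (a b : 'I_3) : is_cliqueset [set [set a; b]].
Proof. by apply: cs1; apply/set0Pn; exists a; rewrite !inE eqxx. Qed.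

Theorem mainTheorem6 (R : realType) :
  (exists (T C1 C2 C3 : R -> {set {set 'I_3}}),
      [/\ is_treegram T,
          [/\ is_cliquegram C1, is_cliquegram C2 & is_cliquegram C3],
          [/\ C1 <> T, C2 <> T & C3 <> T] &
          forall t, T t = cjoin (cjoin (C1 t) (C2 t)) (C3 t)])
  /\
  (forall (X : finType) (C : R -> {set {set X}}), is_cliquegram C ->
     exists (T0 : R -> {set {set X}}) (s : seq (R -> {set {set X}})),
       [/\ is_treegram T0, (forall i, (i < size s)%N -> is_treegram (nth T0 s i)) &
           forall t, C t = foldr (fun T acc => cjoin (T t) acc) (T0 t) s]).
Proof.
split.
  exists (step [set [set: 'I_3]]), (step [set [set o0; o1]]),
    (step [set [set o1; o2]]), (step [set [set o0; o2]]).
  have [Tcs _ _ _ _] := step_cg R setT_cs.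
  split.
  - split; first exact (step_cg R setT_cs).
    by move=> t; rewrite /step; case: ifP => _; [exact: sp0|case: ifP => _; exact: sp1].
  - by split; exact (step_cg R (pair_cs _ _)).
  - split=> /(congr1 (fun F => F 0)); rewrite /step ltxx ltr01 => /set1_inj E.
    + by have := in_setT o2; rewrite -E !inE.
    + by have := in_setT o0; rewrite -E !inE.
    + by have := in_setT o1; rewrite -E !inE.
  - move=> t; rewrite cjoinE -{1}(mcP_cs (Tcs t)); apply: mcP_ext => u v.
    rewrite pinU pin_cjoin /step.
    case: ifP => _; first by rewrite !pin0.
    case: ifP => _; last by rewrite !pin1 !inE.
    rewrite !pin1 !inE.
    by case: u => [[|[|[|m]]] hu]; case: v => [[|[|[|n]]] hv].
move=> X C hC.
have hcs : forall t, is_cliqueset (C t) by case: hC.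
pose g := fun (A : {set X}) (t : R) => f A (C t).
exists (g [set: X]), (g [set: X] :: map g (enum {set X})); split.
- exact: tg_f.
- move=> [|i] /= hi; first exact: tg_f.
  rewrite size_map in hi; rewrite (nth_map set0) //; exact: tg_f.
- move=> t /=; rewrite cjoinE; transitivity (mcP (pin (C t))); first by rewrite mcP_cs.
  apply: mcP_ext => u v; rewrite pinU fold_pin has_map.
  apply/idP/idP.
    case/existsP => B /andP[BC /andP[uB vB]].
    apply/orP; right; apply/orP; right; apply/hasP; exists B; first by rewrite mem_enum.
    exact: pin_f_rev.
  case/orP => [/pin_f //|]; case/orP => [/pin_f //|].
  by case/hasP => B _ /pin_f.
Qed.
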